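(* Let $\alpha\in\mathbb{R}$, let $p$ be a positive integer, $b\in\mathbb{R}$, and let $f$ be a real function defined on ${}_{b+p-1}\mathbb{N}=\{b+p-1,b+p-2,\dots\}$. Then for all $t\in{}_{b-p}\mathbb{N}$, $${}_{b}\nabla^{-\alpha}\,{}_{\ominus}\Delta^p f(t)={}_{\ominus}\Delta^p\,{}_{b}\nabla^{-\alpha}f(t)-\sum_{k=0}^{p-1}\frac{(b-t)^{\overline{\alpha-p+k}}}{\Gamma(\alpha+k-p+1)}\,{}_{\ominus}\Delta^k f(b).$$
   Context: Notation: ${}_{c}\mathbb{N}=\{c,c-1,\dots\}$, $\rho(t)=t-1$, $\Delta g(t)=g(t+1)-g(t)$, $\Delta^m=\Delta(\Delta^{m-1})$, ${}_{\ominus}\Delta^m g=(-1)^m\Delta^m g$. Rising factorial: $t^{\overline{\beta}}=\Gamma(t+\beta)/\Gamma(t)$ with $0^{\overline{\beta}}=0$; the reciprocal of $\Gamma$ at a pole is $0$. For $\gamma>0$ the nabla right fractional sum is ${}_{b}\nabla^{-\gamma}g(t)=\frac{1}{\Gamma(\gamma)}\sum_{s=t}^{b-1}(s-\rho(t))^{\overline{\gamma-1}}g(s)$, where a sum with upper limit smaller than lower limit is $0$ (so these sums vanish for $t\ge b$). For $\beta>0$ let $n=[\beta]+1$ with $[\beta]$ the greatest integer strictly less than $\beta$; the nabla right fractional difference is ${}_{b}\nabla^{\beta}g(t)={}_{\ominus}\Delta^n\,{}_{b}\nabla^{-(n-\beta)}g(t)=(-1)^n\Delta^n\,{}_{b}\nabla^{-(n-\beta)}g(t)$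 (order-$0$ operator = identity). In the claim, for $\alpha<0$ the symbol ${}_{b}\nabla^{-\alpha}$ means the nabla right fractional difference of order $-\alpha$, and for $\alpha=0$ it is the identity. *)

(* Defs.v *)
From Stdlib Require Import Reals ZArith ClassicalEpsilon.
Open Scope R_scope.

Fixpoint rsum (n : nat) (F : nat -> R) : R :=
  match n with
  | O => 0
  | S m => rsum m F + F m
  end.

(* Euler/Gauss product sequence for 1/Gamma:
   x (x+1) ... (x+m) / (m! m^x),  with m = n+1. *)
Definition rgamma_seq (x : R) (n : nat) : R :=
  prod_f_R0 (fun i => x + INR i) (S n) /
  (INR (fact (S n)) * Rpower (INR (S n)) x).

(* Reciprocal Gamma function 1/Gamma(x) = lim_m x(x+1)...(x+m)/(m! m^x);
   an entire function, equal to 0 exactly at the poles 0,-1,-2,... *)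
Definition rgamma (x : R) : R :=
  epsilon (inhabits 0) (fun l => Un_cv (rgamma_seq x) l).

(* Gamma(x) = 1 / (1/Gamma(x)).  At a pole, rgamma x = 0 and (Stdlib's
   convention / 0 = 0) Gamma x = 0; only 1/Gamma at poles (= 0) is used. *)
Definition Gamma (x : R) : R := / rgamma x.

(* Rising factorial t^{(beta)} = Gamma(t+beta)/Gamma(t)
   (equals 0 when t is a pole of Gamma, in particular 0^{(beta)} = 0). *)
Definition rising (t beta : R) : R := Gamma (t + beta) / Gamma t.

Definition rho (t : R) : R := t - 1.

Definition fdelta (g : R -> R) : R -> R := fun t => g (t + 1) - g t.
Fixpoint fdelta_n (m : nat) (g : R -> R) : R -> R :=
  match m with
  | O => g
  | S k => fdelta (fdelta_n k g)
  end.
Definition odelta (m : nat) (g : R -> R) : R -> R :=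
  fun t => (-1) ^ m * fdelta_n m g t.

(* Nabla right fractional sum of order gam > 0:
   b nabla^{-gam} g(t) = 1/Gamma(gam) * sum_{s=t}^{b-1} (s - rho t)^{(gam-1)} g(s),
   where s = t, t+1, ..., b-1 (there are b - t terms when b - t is a natural
   number; empty sum, i.e. 0, when t >= b). *)
Definition nabla_sum (b gam : R) (g : R -> R) (t : R) : R :=
  / Gamma gam *
  rsum (Z.to_nat (Int_part (b - t)))
       (fun i => rising ((t + INR i) - rho t) (gam - 1) * g (t + INR i)).

(* [beta] = greatest integer strictly less than beta  (= - up(-beta)). *)
Definition bracket (beta : R) : Z := (- up (- beta))%Z.
Definition nord (beta : R) : nat := Z.to_nat (bracket beta + 1).

Definition nabla_sum0 (b gam : R) (g : R -> R) : R -> R :=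
  if Req_EM_T gam 0 then g else nabla_sum b gam g.

Definition nabla_diff (b beta : R) (g : R -> R) : R -> R :=
  odelta (nord beta) (nabla_sum0 b (INR (nord beta) - beta) g).

(* The operator written  b nabla^{-alpha}  in the claim, for alpha real:
   fractional sum of order alpha if alpha > 0, identity if alpha = 0,
   fractional difference of order -alpha if alpha < 0. *)
Definition nabla_op (b alpha : R) (g : R -> R) : R -> R :=
  if Rlt_dec 0 alpha then nabla_sum b alpha g
  else if Req_EM_T alpha 0 then g
  else nabla_diff b (- alpha) g.

(* Main.v *)
Require Import Defs.
From Stdlib Require Import Reals ZArith ClassicalEpsilon FunctionalExtensionality Lra Lia.
Open Scope R_scope.

Lemma exp_le_mono a b : a <= b -> exp a <= exp b.
Proof. intros [H|H]; [left; apply exp_increasing; auto| subst; lra]. Qed.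

Lemma ln_le_ab a b : 0 < a -> 0 < b -> ln b - ln a <= b / a - 1.
Proof.
  intros Ha Hb.
  assert (E : ln b - ln a = ln (b / a)).
  { unfold Rdiv. rewrite ln_mult; [|lra| apply Rinv_0_lt_compat; lra].
    rewrite ln_Rinv; lra. }
  rewrite E. pose proof (exp_ineq1_le (ln (b/a))) as H.
  rewrite exp_ln in H. lra. apply Rdiv_lt_0_compat; lra.
Qed.

Lemma prod_S f k : prod_f_R0 f (S k) = prod_f_R0 f k * f (S k).
Proof. reflexivity. Qed.

Lemma seq_step x n : 0 < x ->
  rgamma_seq x (S n) = rgamma_seq x n *
   exp (ln (x + INR (S (S n))) - ln (INR (S (S n))) - x * (ln (INR (S (S n))) - ln (INR (S n)))).
Proof.
  intros Hx. unfold rgamma_seq, Rpower.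
  rewrite (prod_S _ (S n)).
  rewrite (fact_simpl (S n)), mult_INR.
  assert (H1 : 0 < INR (S n)) by (apply lt_0_INR; lia).
  assert (H2 : 0 < INR (S (S n))) by (apply lt_0_INR; lia).
  set (N := INR (S n)) in *. set (N' := INR (S (S n))) in *.
  replace (ln (x+N') - ln N' - x*(ln N' - ln N)) with
    (ln (x+N') + (- ln N') + (- (x * ln N')) + x * ln N) by ring.
  rewrite !exp_plus, !exp_Ropp, !exp_ln by lra.
  pose proof (INR_fact_neq_0 (S n)). pose proof (exp_pos (x * ln N)).
  pose proof (exp_pos (x * ln N')).
  field. repeat split; lra.
Qed.

Lemma e_bounds x n : 0 < x ->
  let N := INR (S n) in let N' := INR (S (S n)) in
  let e := ln (x + N') - ln N' - x * (ln N' - ln N) in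
  e <= 0 /\ - (x * (1 + x)) / (N * N') <= e.
Proof.
  intros Hx N N' e.
  assert (H1 : 0 < N) by (apply lt_0_INR; lia).
  assert (HN : N' = N + 1) by (unfold N, N'; rewrite (S_INR (S n)); ring).
  assert (A1 := ln_le_ab N' (x + N') ltac:(lra) ltac:(lra)).
  assert (A2 := ln_le_ab (x + N') N' ltac:(lra) ltac:(lra)).
  assert (B1 := ln_le_ab N N' ltac:(lra) ltac:(lra)).
  assert (B2 := ln_le_ab N' N ltac:(lra) ltac:(lra)).
  split.
  - assert (U : (x + N') / N' - 1 - x * (1 - N / N') = 0) by (rewrite HN; field; lra).
    assert (x * (1 - N/N') <= x * (ln N' - ln N)) by (apply Rmult_le_compat_l; lra).
    unfold e. lra.
  - assert (V : (1 - N' / (x + N')) - x * (N' / N - 1) + x * (1 + x) / (N * N')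
                 = x * (x * x + x) / (N * N' * (x + N'))) by (rewrite HN; field; lra).
    assert (0 <= x * (x * x + x) / (N * N' * (x + N'))).
    { apply Rmult_le_pos. nra. left; apply Rinv_0_lt_compat.
      apply Rmult_lt_0_compat; [|lra]. apply Rmult_lt_0_compat; lra. }
    assert (x * (ln N' - ln N) <= x * (N' / N - 1)) by (apply Rmult_le_compat_l; lra).
    unfold e. unfold Rdiv at 1. rewrite Ropp_mult_distr_l. lra.
Qed.

Lemma seq0_pos x : 0 < x -> 0 < rgamma_seq x 0.
Proof.
  intros Hx. unfold rgamma_seq. apply Rdiv_lt_0_compat.
  - simpl. nra.
  - apply Rmult_lt_0_compat. simpl; lra. unfold Rpower; apply exp_pos.
Qed.

Lemma seq_lb x : 0 < x -> forall n,
  rgamma_seq x 0 * exp (- (x * (1 + x)) * (1 - / INR (S n))) <= rgamma_seq x n.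
Proof.
  intros Hx. induction n.
  - replace (- (x * (1 + x)) * (1 - / INR 1)) with 0 by (simpl; field).
    rewrite exp_0; lra.
  - rewrite seq_step by auto.
    destruct (e_bounds x n Hx) as [_ Hl]. simpl in Hl.
    set (e := ln (x + INR (S (S n))) - ln (INR (S (S n))) - x * (ln (INR (S (S n))) - ln (INR (S n)))) in *.
    assert (H1 : 0 < INR (S n)) by (apply lt_0_INR; lia).
    assert (HN : INR (S (S n)) = INR (S n) + 1) by (rewrite (S_INR (S n)); ring).
    assert (E : - (x * (1 + x)) * (1 - / INR (S (S n))) =
      - (x * (1 + x)) * (1 - / INR (S n)) + - (x * (1 + x)) / (INR (S n) * INR (S (S n)))).
    { rewrite HN. field. lra. }
    rewrite E, exp_plus.
    pose proof (seq0_pos x Hx). pose proof (exp_pos (- (x * (1 + x)) * (1 - / INR (S n)))).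
    assert (exp (- (x * (1 + x)) / (INR (S n) * INR (S (S n)))) <= exp e) by (apply exp_le_mono; auto).
    pose proof (exp_pos (- (x * (1 + x)) / (INR (S n) * INR (S (S n))))).
    rewrite <- Rmult_assoc.
    apply Rle_trans with (rgamma_seq x n * exp (- (x * (1 + x)) / (INR (S n) * INR (S (S n))))).
    + apply Rmult_le_compat_r; lra.
    + apply Rmult_le_compat_l; [|lra]. nra.
Qed.

Lemma cv_const c : Un_cv (fun _ => c) c.
Proof. intros eps He. exists O. intros. rewrite Rdist_eq. lra. Qed.

Lemma cv_pos x : 0 < x -> exists l, Un_cv (rgamma_seq x) l /\ 0 < l.
Proof.
  intros Hx.
  set (c := x * (1 + x)).
  assert (Hc : 0 <= c) by (unfold c; nra).
  set (K := rgamma_seq x 0 * exp (- c)).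
  assert (HK : 0 < K) by (unfold K; apply Rmult_lt_0_compat; [apply seq0_pos; auto| apply exp_pos]).
  assert (Hb : forall n, K <= rgamma_seq x n).
  { intro n. eapply Rle_trans; [|apply (seq_lb x Hx n)].
    unfold K. apply Rmult_le_compat_l. left; apply seq0_pos; auto.
    apply exp_le_mono. fold c.
    assert (0 < / INR (S n)) by (apply Rinv_0_lt_compat, lt_0_INR; lia).
    nra. }
  assert (Hd : Un_decreasing (rgamma_seq x)).
  { intro n. rewrite seq_step by auto.
    destruct (e_bounds x n Hx) as [Hu _]. simpl in Hu.
    pose proof (Hb n).
    rewrite <- (Rmult_1_r (rgamma_seq x n)) at 2.
    apply Rmult_le_compat_l; [lra|].
    rewrite <- exp_0. apply exp_le_mono. auto. }
  assert (Hl : has_lb (rgamma_seq x)).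
  { exists (- K). intros y [i ->]. unfold opp_seq. pose proof (Hb i). lra. }
  destruct (decreasing_cv _ Hd Hl) as [l Hcv].
  exists l. split; auto.
  assert (K <= l) by (apply (Rle_cv_lim (Un := fun _ => K) (Vn := rgamma_seq x)); auto; apply cv_const).
  lra.
Qed.

Lemma cv_ext_ev (u v : nat -> R) l N0 :
  (forall n, (n >= N0)%nat -> u n = v n) -> Un_cv v l -> Un_cv u l.
Proof.
  intros H Hv eps He. destruct (Hv eps He) as [N1 HN]. exists (max N0 N1).
  intros n Hn. rewrite H by lia. apply HN; lia.
Qed.

Lemma cv_ratio x : Un_cv (fun n => INR (S n) / (x + INR (S n) + 1)) 1.
Proof.
  intros eps He.
  destruct (INR_unbounded (Rabs x + 1 + Rabs (x + 1) / eps)) as [M HM].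
  exists M. intros n Hn.
  assert (HMn : INR M <= INR (S n)) by (apply le_INR; lia).
  set (N := INR (S n)) in *.
  set (D := x + N + 1).
  pose proof (Rle_abs x). pose proof (Rle_abs (- x)). rewrite Rabs_Ropp in *.
  pose proof (Rabs_pos (x+1)).
  assert (HD : Rabs (x + 1) / eps < D) by (unfold D; lra).
  assert (HD0 : 0 < D) by (assert (0 <= Rabs (x+1)/eps) by (apply Rmult_le_pos; [lra| left; apply Rinv_0_lt_compat; lra]); lra).
  assert (HeD : Rabs (x + 1) < eps * D).
  { apply (Rmult_lt_compat_l eps) in HD; [|lra].
    replace (eps * (Rabs (x + 1) / eps)) with (Rabs (x+1)) in HD by (field; lra). lra. }
  unfold Rdist. set (q := N / D - 1).
  assert (Hq : q * D = - (x + 1)) by (unfold q, D; field; fold D; lra).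
  pose proof (Rle_abs (x+1)). pose proof (Rle_abs (-(x+1))). rewrite Rabs_Ropp in *.
  apply Rabs_def1; nra.
Qed.

Lemma prod_shift x k :
  prod_f_R0 (fun i => x + INR i) k * (x + INR k + 1) = x * prod_f_R0 (fun i => x + 1 + INR i) k.
Proof.
  induction k.
  - simpl. ring.
  - rewrite !prod_S. rewrite S_INR.
    transitivity ((prod_f_R0 (fun i => x + INR i) k * (x + INR k + 1)) * (x + INR k + 1 + 1)); [ring|].
    rewrite IHk. ring.
Qed.

Lemma seq_rel x n : x + INR (S n) + 1 <> 0 ->
  rgamma_seq x n = x * rgamma_seq (x + 1) n * (INR (S n) / (x + INR (S n) + 1)).
Proof.
  intros Hne. unfold rgamma_seq.
  assert (H1 : 0 < INR (S n)) by (apply lt_0_INR; lia).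
  rewrite Rpower_plus, Rpower_1 by auto.
  pose proof (prod_shift x (S n)) as HP.
  set (P := prod_f_R0 (fun i => x + INR i) (S n)) in *.
  set (P' := prod_f_R0 (fun i => x + 1 + INR i) (S n)) in *.
  replace P with (x * P' / (x + INR (S n) + 1)).
  2:{ rewrite <- HP. field. auto. }
  pose proof (INR_fact_neq_0 (S n)).
  assert (0 < Rpower (INR (S n)) x) by (unfold Rpower; apply exp_pos).
  field. repeat split; lra.
Qed.

Lemma cv_rel x l : Un_cv (rgamma_seq (x + 1)) l -> Un_cv (rgamma_seq x) (x * l).
Proof.
  intros H.
  destruct (INR_unbounded (- x - 2)) as [N0 HN0].
  apply cv_ext_ev with (N0 := N0) (v := fun n => x * rgamma_seq (x + 1) n * (INR (S n) / (x + INR (S n) + 1))).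
  { intros n Hn. apply seq_rel. assert (INR N0 <= INR n) by (apply le_INR; lia).
    rewrite S_INR. lra. }
  replace (x * l) with ((x * l) * 1) by ring.
  apply (CV_mult (fun n => x * rgamma_seq (x + 1) n) (fun n => INR (S n) / (x + INR (S n) + 1))).
  - apply (CV_mult (fun _ => x) (rgamma_seq (x + 1))); auto. apply cv_const.
  - apply cv_ratio.
Qed.

Lemma cv_exists : forall k x, 0 < x + INR k -> exists l, Un_cv (rgamma_seq x) l.
Proof.
  induction k; intros x Hx.
  - simpl in Hx. destruct (cv_pos x) as [l [Hl _]]; [lra|]. eauto.
  - destruct (IHk (x + 1)) as [l Hl]. rewrite S_INR in Hx. lra.
    exists (x * l). apply cv_rel; auto.
Qed.

Lemma rg_cv x : Un_cv (rgamma_seq x) (rgamma x).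
Proof.
  unfold rgamma. apply epsilon_spec.
  destruct (INR_unbounded (- x)) as [k Hk].
  apply (cv_exists k). lra.
Qed.

Lemma rg_rec x : rgamma x = x * rgamma (x + 1).
Proof. apply (UL_sequence (rgamma_seq x)). apply rg_cv. apply cv_rel, rg_cv. Qed.

Lemma rg_pos x : 0 < x -> 0 < rgamma x.
Proof.
  intros Hx. destruct (cv_pos x Hx) as [l [Hl Hp]].
  rewrite (UL_sequence _ _ _ (rg_cv x) Hl). auto.
Qed.

Lemma rg_zero k : rgamma (- INR k) = 0.
Proof.
  induction k.
  - rewrite rg_rec. simpl. ring.
  - rewrite rg_rec. replace (- INR (S k) + 1) with (- INR k) by (rewrite S_INR; ring).
    rewrite IHk. ring.
Qed.

Lemma rg_nz_aux : forall k y, 0 < y + INR k -> rgamma y <> 0 \/ exists j, y = - INR j.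
Proof.
  induction k; intros y Hy.
  - simpl in Hy. left. pose proof (rg_pos y). lra.
  - rewrite S_INR in Hy. destruct (IHk (y + 1)) as [H|[j Hj]]; [lra| |].
    + destruct (Req_dec y 0) as [->|Hy0].
      * right. exists O. simpl. ring.
      * left. rewrite rg_rec. intro E. apply Rmult_integral in E. tauto.
    + right. exists (S j). rewrite S_INR. lra.
Qed.

Lemma rg_zero_inv y : rgamma y = 0 -> exists j, y = - INR j.
Proof.
  intros H. destruct (INR_unbounded (- y)) as [k Hk].
  destruct (rg_nz_aux k y) as [H'|H']; [lra| tauto | auto].
Qed.

Definition U (be x : R) : R := rgamma x / rgamma (x + be) * rgamma (be + 1).

Lemma U_ext b1 b2 x1 x2 : b1 = b2 -> x1 = x2 -> U b1 x1 = U b2 x2.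
Proof. intros -> ->; auto. Qed.

Lemma invGamma x : / Gamma x = rgamma x.
Proof. unfold Gamma. apply Rinv_inv. Qed.

Lemma rising_r x be : rising x be = rgamma x / rgamma (x + be).
Proof. unfold rising, Gamma, Rdiv. rewrite Rinv_inv. ring. Qed.

Lemma OS be x : rgamma (x + be - 1) <> 0 \/ rgamma (be + 1) = 0 ->
  U be x - U be (x - 1) = U (be - 1) x.
Proof.
  unfold U. replace (be - 1 + 1) with be by ring.
  replace (x + (be - 1)) with (x + be - 1) by ring.
  replace (x - 1 + be) with (x + be - 1) by ring.
  assert (Hb : rgamma be = be * rgamma (be + 1)) by apply rg_rec.
  intros [H|H].
  - assert (H1 : rgamma (x + be - 1) = (x + be - 1) * rgamma (x + be)).
    { rewrite rg_rec. f_equal. f_equal. ring. }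
    assert (H2 : rgamma (x - 1) = (x - 1) * rgamma x).
    { rewrite rg_rec. f_equal. f_equal. ring. }
    rewrite H1 in *. rewrite H2, Hb.
    assert (x + be - 1 <> 0) by (intro E; rewrite E in H; lra).
    assert (rgamma (x + be) <> 0) by (intro E; rewrite E in H; lra).
    field. auto.
  - rewrite Hb, H. unfold Rdiv. ring.
Qed.

Lemma fdn_S k F t : fdelta_n (S k) F t = fdelta_n k F (t + 1) - fdelta_n k F t.
Proof. reflexivity. Qed.

Lemma fdn_lin k : forall t F G H a c,
  (forall j, (j <= k)%nat -> F (t + INR j) = a * G (t + INR j) + c * H (t + INR j)) ->
  fdelta_n k F t = a * fdelta_n k G t + c * fdelta_n k H t.
Proof.
  induction k; intros t F G H a c Hj.
  - simpl. specialize (Hj O (le_n O)). simpl in Hj. rewrite Rplus_0_r in Hj. auto.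
  - rewrite !fdn_S. rewrite (IHk t F G H a c), (IHk (t + 1) F G H a c).
    + ring.
    + intros j Hjk. replace (t + 1 + INR j) with (t + INR (S j)) by (rewrite S_INR; ring).
      apply Hj. lia.
    + intros j Hjk. apply Hj. lia.
Qed.

Lemma fdn_comm k : forall F t, fdelta_n k (fdelta F) t = fdelta_n (S k) F t.
Proof.
  induction k; intros F t.
  - reflexivity.
  - rewrite fdn_S, !IHk. rewrite (fdn_S (S k)). reflexivity.
Qed.

Lemma od0 F t : odelta 0 F t = F t.
Proof. unfold odelta. simpl. ring. Qed.

Lemma od1 F t : odelta 1 F t = F t - F (t + 1).
Proof. unfold odelta. simpl. unfold fdelta. ring. Qed.

Lemma od_S_left k F t : odelta (S k) F t = odelta k F t - odelta k F (t + 1).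
Proof. unfold odelta. rewrite fdn_S. simpl. ring. Qed.

Lemma od_1_comp k F t : odelta 1 (odelta k F) t = odelta (S k) F t.
Proof. rewrite od1, od_S_left. ring. Qed.

Lemma od_lin k t F G H a c :
  (forall j, (j <= k)%nat -> F (t + INR j) = a * G (t + INR j) + c * H (t + INR j)) ->
  odelta k F t = a * odelta k G t + c * odelta k H t.
Proof. intros Hj. unfold odelta. rewrite (fdn_lin k t F G H a c Hj). ring. Qed.

Lemma od_comp_1 k F t : odelta k (odelta 1 F) t = odelta (S k) F t.
Proof.
  rewrite (od_lin k t (odelta 1 F) (fdelta F) (fun _ => 0) (-1) 0).
  - unfold odelta at 1. rewrite fdn_comm. unfold odelta. simpl. ring.
  - intros j _. unfold odelta. simpl. ring.
Qed.

Lemma rsum_ext n F G : (forall i, (i < n)%nat -> F i = G i) -> rsum n F = rsum n G.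
Proof.
  induction n; intros H; simpl; auto.
  rewrite IHn, H; auto.
Qed.

Lemma rsum_lin n F G a c : rsum n (fun i => a * F i + c * G i) = a * rsum n F + c * rsum n G.
Proof. induction n; simpl; [ring|]. rewrite IHn. ring. Qed.

Lemma rsum_Sr n F : rsum (S n) F = rsum n F + F n.
Proof. reflexivity. Qed.

Lemma rsum_shift n F : rsum (S n) F = F O + rsum n (fun k => F (S k)).
Proof.
  induction n; simpl; [ring|]. simpl in IHn. rewrite IHn. ring.
Qed.

Lemma Int_part_IZR z : Int_part (IZR z) = z.
Proof. symmetry. apply Int_part_spec. lra. Qed.

Lemma NSpos b ga g n : nabla_sum b ga g (b - INR n) =
  rgamma ga * rsum n (fun i => rising (INR i + 1) (ga - 1) * g (b - INR n + INR i)).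
Proof.
  unfold nabla_sum. rewrite invGamma.
  replace (b - (b - INR n)) with (INR n) by ring.
  rewrite Int_part_INR, Nat2Z.id. f_equal. apply rsum_ext; intros i _.
  f_equal. f_equal. unfold rho; ring.
Qed.

Lemma NSzero b ga g z : (z <= 0)%Z -> nabla_sum b ga g (b - IZR z) = 0.
Proof.
  intros Hz. unfold nabla_sum.
  replace (b - (b - IZR z)) with (IZR z) by ring.
  rewrite Int_part_IZR. replace (Z.to_nat z) with O by lia. simpl. ring.
Qed.

Lemma rg_IZR_nonpos z : (z <= 0)%Z -> rgamma (IZR z) = 0.
Proof.
  intros Hz. replace (IZR z) with (- INR (Z.to_nat (- z))).
  apply rg_zero. rewrite INR_IZR_INZ, Z2Nat.id by lia. rewrite opp_IZR. ring.
Qed.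

Lemma BG b ga : 0 < ga -> forall f z,
  nabla_sum b ga (odelta 1 f) (b - IZR z) =
  odelta 1 (nabla_sum b ga f) (b - IZR z) - U (ga - 1) (IZR z) * f b.
Proof.
  intros Hg f z. rewrite od1.
  destruct (Z_le_gt_dec z 0) as [Hz|Hz].
  - replace (b - IZR z + 1) with (b - IZR (z - 1)) by (rewrite minus_IZR; ring).
    rewrite !NSzero by lia. unfold U. rewrite rg_IZR_nonpos by auto.
    unfold Rdiv. ring.
  - replace (IZR z) with (INR (S (Z.to_nat (z - 1)))).
    2:{ rewrite S_INR, INR_IZR_INZ, Z2Nat.id by lia. rewrite minus_IZR. ring. }
    set (m := Z.to_nat (z - 1)).
    replace (b - INR (S m) + 1) with (b - INR m) by (rewrite S_INR; ring).
    rewrite !NSpos.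
    set (W := fun i => rising (INR i + 1) (ga - 1)).
    rewrite (rsum_ext (S m) _ (fun i => 1 * (W i * f (b - INR (S m) + INR i))
                                   + (-1) * (W i * f (b - INR (S m) + INR i + 1)))).
    2:{ intros i _. rewrite od1. unfold W. ring. }
    rewrite rsum_lin. rewrite (rsum_Sr m (fun i => W i * f (b - INR (S m) + INR i + 1))).
    rewrite (rsum_ext m (fun i => W i * f (b - INR (S m) + INR i + 1))
                        (fun i => W i * f (b - INR m + INR i))).
    2:{ intros i _. f_equal. f_equal. rewrite S_INR. ring. }
    replace (b - INR (S m) + INR m + 1) with b by (rewrite S_INR; ring).
    assert (HU : U (ga - 1) (INR (S m)) = rgamma ga * W m).
    { unfold U, W. rewrite rising_r. rewrite S_INR.
      replace (ga - 1 + 1) with ga by ring.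
      replace (INR m + 1 + (ga - 1)) with (INR m + 1 + (ga - 1)) by ring. unfold Rdiv. ring. }
    rewrite HU. unfold W. ring.
Qed.

Lemma IT b be : forall k t,
  (forall i j, (i + j < k)%nat ->
     rgamma (b - t - INR i + be - INR j - 1) <> 0 \/ rgamma (be - INR j + 1) = 0) ->
  odelta k (fun s => U be (b - s)) t = U (be - INR k) (b - t).
Proof.
  induction k; intros t H.
  - rewrite od0. apply U_ext; simpl; ring.
  - rewrite od_S_left. rewrite (IHk t), (IHk (t + 1)).
    + replace (b - (t + 1)) with (b - t - 1) by ring.
      rewrite OS.
      * apply U_ext; [rewrite S_INR|]; ring.
      * destruct (H O k ltac:(lia)) as [E|E]; [left|right].
        -- replace (b - t + (be - INR k) - 1) with (b - t - INR 0 + be - INR k - 1) by (simpl; ring). auto.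
        -- auto.
    + intros i j Hij. replace (b - (t + 1) - INR i) with (b - t - INR (S i)) by (rewrite S_INR; ring).
      apply H. lia.
    + intros i j Hij. apply H. lia.
Qed.

Lemma nop_pos b a g : 0 < a -> nabla_op b a g = nabla_sum b a g.
Proof. intros H. unfold nabla_op. destruct (Rlt_dec 0 a); [auto|lra]. Qed.

Lemma nop_0 b g : nabla_op b 0 g = g.
Proof. unfold nabla_op. destruct (Rlt_dec 0 0); [lra|]. destruct (Req_EM_T 0 0); [auto|lra]. Qed.

Lemma nop_neg b a g : a < 0 ->
  nabla_op b a g = odelta (nord (- a)) (nabla_sum0 b (INR (nord (- a)) - - a) g).
Proof.
  intros H. unfold nabla_op. destruct (Rlt_dec 0 a); [lra|].
  destruct (Req_EM_T a 0); [lra|]. reflexivity.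
Qed.

Lemma nord_facts be : 0 < be -> 0 <= INR (nord be) - be < 1.
Proof.
  intros H. unfold nord, bracket.
  destruct (archimed (- be)) as [H1 H2].
  set (u := up (- be)) in *.
  assert (Hu : (u <= 0)%Z).
  { destruct (Z_le_gt_dec u 0); auto. assert (1 <= IZR u) by (apply IZR_le; lia). lra. }
  rewrite INR_IZR_INZ, Z2Nat.id by lia. rewrite plus_IZR, opp_IZR. lra.
Qed.

Lemma no_int_01 (w : Z) : 0 < IZR w < 1 -> False.
Proof.
  intros [H1 H2]. apply lt_IZR in H1. replace 1 with (IZR 1) in H2 by reflexivity.
  apply lt_IZR in H2. lia.
Qed.

Lemma Base1 b a f : forall s, (exists m, s = b - 1 - INR m) ->
  nabla_op b a (odelta 1 f) s = odelta 1 (nabla_op b a f) s - U (a - 1) (b - s) * f b.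
Proof.
  intros s [m Hs].
  assert (Hz : s = b - IZR (Z.of_nat (S m))) by (rewrite <- INR_IZR_INZ, S_INR; lra).
  destruct (Rtotal_order a 0) as [Hn|[H0|Hp]].
  - rewrite !nop_neg by auto.
    pose proof (nord_facts (- a) ltac:(lra)) as Hg.
    set (n := nord (- a)) in *. set (ga := INR n - - a) in *.
    unfold nabla_sum0. destruct (Req_EM_T ga 0) as [E|E].
    + rewrite od_comp_1, od_1_comp.
      unfold U. replace (a - 1 + 1) with (- INR n) by (unfold ga in E; lra).
      rewrite rg_zero. unfold Rdiv. ring.
    + rewrite (od_lin n s (nabla_sum b ga (odelta 1 f)) (odelta 1 (nabla_sum b ga f))
                 (fun x => U (ga - 1) (b - x)) 1 (- f b)).
      * rewrite od_comp_1, od_1_comp. rewrite IT.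
        -- replace (ga - 1 - INR n) with (a - 1) by (unfold ga; ring). ring.
        -- intros i j _. left. intro Z0. apply rg_zero_inv in Z0. destruct Z0 as [q Hq].
           apply (no_int_01 (Z.of_nat i + Z.of_nat j + 1 - Z.of_nat m - Z.of_nat q)).
           rewrite minus_IZR, minus_IZR, !plus_IZR, <- !INR_IZR_INZ.
           rewrite Hs in Hq. lra.
      * intros j Hj.
        replace (s + INR j) with (b - IZR (Z.of_nat (S m) - Z.of_nat j))
          by (rewrite minus_IZR, <- !INR_IZR_INZ, S_INR; lra).
        rewrite BG by lra.
        replace (b - (b - IZR (Z.of_nat (S m) - Z.of_nat j))) with (IZR (Z.of_nat (S m) - Z.of_nat j)) by ring.
        ring.
  - subst a. rewrite !nop_0. unfold U. replace (0 - 1 + 1) with 0 by ring.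
    assert (R0 : rgamma 0 = 0) by (pose proof (rg_zero 0) as H; simpl in H; rewrite Ropp_0 in H; exact H).
    rewrite R0. unfold Rdiv. ring.
  - rewrite !nop_pos by auto. rewrite Hz, BG by auto. f_equal. f_equal. apply U_ext; ring.
Qed.

Lemma Main b a : forall p' f m,
  nabla_op b a (odelta (S p') f) (b - INR (S p') - INR m) =
  odelta (S p') (nabla_op b a f) (b - INR (S p') - INR m)
  - rsum (S p') (fun k => U (a - INR (S p') + INR k) (b - (b - INR (S p') - INR m)) * odelta k f b).
Proof.
  induction p'; intros f m.
  - rewrite Base1.
    2:{ exists m. simpl. ring. }
    simpl rsum. rewrite od0. f_equal. rewrite Rplus_0_l. f_equal. apply U_ext; simpl; ring.
  - set (p := S p') in *.
    replace (odelta (S p) f) with (odelta p (odelta 1 f))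
      by (apply functional_extensionality; intros; apply od_comp_1).
    assert (Ht : b - INR (S p) - INR m = b - INR p - INR (S m)) by (rewrite !S_INR; ring).
    rewrite Ht, IHp'. fold p.
    set (t := b - INR p - INR (S m)).
    rewrite (od_lin p t (nabla_op b a (odelta 1 f)) (odelta 1 (nabla_op b a f))
                 (fun x => U (a - 1) (b - x)) 1 (- f b)).
    2:{ intros j Hj. rewrite Base1. ring. exists (p - j + m)%nat.
        unfold t. rewrite plus_INR, minus_INR by lia. rewrite S_INR. ring. }
    rewrite od_comp_1. rewrite IT.
    2:{ intros i j Hij. destruct (Req_dec (rgamma (b - t - INR i + (a - 1) - INR j - 1)) 0) as [Hz|Hz]; [right|left; auto].
        apply rg_zero_inv in Hz. destruct Hz as [q Hq].
        replace (a - 1 - INR j + 1) with (- INR (q + m + (p - S i))).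
        apply rg_zero. rewrite !plus_INR, minus_INR by lia. unfold t in Hq. rewrite !S_INR in *. lra. }
    rewrite (rsum_shift p). rewrite od0.
    rewrite (rsum_ext p (fun k => U (a - INR p + INR k) (b - t) * odelta k (odelta 1 f) b)
                        (fun k => U (a - INR (S p) + INR (S k)) (b - t) * odelta (S k) f b)).
    2:{ intros k _. rewrite od_comp_1. f_equal. apply U_ext; [rewrite !S_INR; ring| auto]. }
    replace (U (a - INR (S p) + INR 0) (b - t)) with (U (a - 1 - INR p) (b - t))
      by (apply U_ext; [rewrite S_INR; simpl; ring|auto]).
    ring.
Qed.

Theorem theorem2p10 (alpha : R) (p : nat) (b : R) (f : R -> R) :
  (0 < p)%nat ->
  forall t : R, (exists m : nat, t = b - INR p - INR m) ->
    nabla_op b alpha (odelta p f) t =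
    odelta p (nabla_op b alpha f) t
    - rsum p (fun k =>
        rising (b - t) (alpha - INR p + INR k)
        / Gamma (alpha + INR k - INR p + 1)
        * odelta k f b).
Proof.
  intros Hp t [m ->]. destruct p as [|p']; [lia|].
  rewrite Main. f_equal. apply rsum_ext. intros k _. f_equal.
  unfold U. rewrite rising_r. unfold Rdiv at 2. rewrite invGamma.
  replace (alpha + INR k - INR (S p') + 1) with (alpha - INR (S p') + INR k + 1) by ring.
  reflexivity.
Qed.
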